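(* For every weak composition $a$ of length $n$, \[\mathfrak{F}_a=\sum_{\substack{b\ge a\\ \mathrm{flat}(b)=\mathrm{flat}(a)}}\mathfrak{L}_b,\] where $b$ ranges over weak compositions of length $n$.
   Context: Weak composition of length $n$: sequence of $n$ nonnegative integers; $\mathrm{flat}(a)$ deletes zero parts; $b\ge a$ means $b_1+\cdots+b_i\ge a_1+\cdots+a_i$ for all $i$. $\mathfrak{F}_a=\sum x^c$ over weak compositions $c$ of length $n$ with $c\ge a$ and $\mathrm{flat}(c)$ refining $\mathrm{flat}(a)$ (i.e. $\mathrm{flat}(a)$ is obtained by summing consecutive parts of $\mathrm{flat}(c)$). A local move replaces consecutive entries $(0,k)$ at positions $p,p+1$ by $(i,j)$ with $i+j=k$, $i,j\ge0$; a fixed slide of $b$ is obtained from $b$ by a (possibly empty) sequence of local moves with $j>0$ required whenever $b_{p+1}\ne0$. $\mathfrak{L}_b=\sum x^c$ over the set of fixed slides $c$ of $b$. *)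

(* Defs.v *)
From HB Require Import structures.
From mathcomp Require Import all_boot all_algebra.
From mathcomp Require Import mpoly.
Set Implicit Arguments. Unset Strict Implicit. Unset Printing Implicit Defensive.
Import GRing.Theory.

(* Weak compositions of length n are the monomial exponents 'X_{1..n};
   the monomial x^c is 'X_[c] in {mpoly int[n]}.  Positions are 0-indexed. *)

Definition wc n (m : 'X_{1..n}) : seq nat := tval (multinom_val m).

Definition flat (s : seq nat) : seq nat := [seq x <- s | x != 0%N].

Definition dominates n (b a : 'X_{1..n}) : bool :=
  all (fun k => sumn (take k (wc a)) <= sumn (take k (wc b)))%N (iota 0 n.+1).

(* refines s t : t is obtained from s by summing consecutive (nonempty)
   blocks of parts of s *)
Fixpoint refines (s t : seq nat) {struct t} : bool :=
  match t with
  | [::] => s == [::]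
  | k :: t' =>
      has (fun i => (sumn (take i s) == k) && refines (drop i s) t')
          (iota 1 (size s))
  end.

(* one local move at position p (0-indexed, entries p and p+1), with the
   fixed-slide restriction relative to the original composition b:
   (0,k) at positions p,p+1 of c becomes (i,j) in c', i+j = k, and
   j > 0 is required whenever b_{p+1} != 0 *)
Definition slide_step (b c c' : seq nat) : bool :=
  has (fun p =>
    [&& size c' == size c,
        nth 0%N c p == 0%N,
        (nth 0%N c' p + nth 0%N c' p.+1 == nth 0%N c p.+1)%N,
        all (fun q => nth 0%N c' q == nth 0%N c q)
            [seq q <- iota 0 (size c) | (q != p) && (q != p.+1)]
      & (nth 0%N b p.+1 != 0%N) ==> (0 < nth 0%N c' p.+1)%N])
    (iota 0 (size c).-1).

(* local moves preserve the total degree, so all intermediate compositions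
   live in the finite type of compositions of degree < mdeg b + 1 *)
Definition slide_rel n (b : 'X_{1..n}) : rel 'X_{1..n < (mdeg b).+1} :=
  fun c c' => slide_step (wc b) (wc (bmnm c)) (wc (bmnm c')).

Definition bself n (b : 'X_{1..n}) : 'X_{1..n < (mdeg b).+1} :=
  BMultinom (ltnSn (mdeg b)).

Definition is_fixed_slide n (b : 'X_{1..n}) (c : 'X_{1..n < (mdeg b).+1}) : bool :=
  connect (@slide_rel n b) (bself b) c.

Definition fund_slide n (a : 'X_{1..n}) : {mpoly int[n]} :=
  (\sum_(c : 'X_{1..n < (mdeg a).+1} |
          dominates (bmnm c) a && refines (flat (wc (bmnm c))) (flat (wc a)))
     'X_[bmnm c])%R.

Definition mono_slide n (b : 'X_{1..n}) : {mpoly int[n]} :=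
  (\sum_(c : 'X_{1..n < (mdeg b).+1} | is_fixed_slide c) 'X_[bmnm c])%R.

(* Main.v *)
Require Import Defs.
From HB Require Import structures.
From mathcomp Require Import all_boot all_algebra.
From mathcomp Require Import mpoly.
From mathcomp Require Import zify.
Set Implicit Arguments. Unset Strict Implicit. Unset Printing Implicit Defensive.

Definition S (s : seq nat) k := sumn (take k s).

Lemma S0 s : S s 0 = 0. Proof. by rewrite /S take0. Qed.

Lemma S_succ s k : S s k.+1 = S s k + nth 0 s k.
Proof.
rewrite /S; elim: s k => [|x s IH] [|k] /=; rewrite ?take0 /=; try lia.
by rewrite IH addnA.
Qed.

Lemma S_add s i j : S s (i + j) = S s i + S (drop i s) j.
Proof.
rewrite /S; elim: s i => [|x s IH] [|i] /=; rewrite ?take0 ?drop0 //.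
by rewrite IH addnA.
Qed.

Lemma S_mono s i j : i <= j -> S s i <= S s j.
Proof. by move=> /subnKC <-; rewrite S_add leq_addr. Qed.

Lemma S_over s k : size s <= k -> S s k = sumn s.
Proof. by move=> h; rewrite /S take_oversize. Qed.

Lemma S_min s k : S s k = S s (minn k (size s)).
Proof.
case: (leqP k (size s)) => h //.
by rewrite !S_over // ltnW.
Qed.

Lemma S_cons x s k : S (x :: s) k.+1 = x + S s k.
Proof. by []. Qed.

Definition inR (s : seq nat) v : Prop := exists2 k, k <= size s & v = S s k.

Lemma inR0 s : inR s 0.
Proof. by exists 0; rewrite ?S0. Qed.

Lemma inR_cons x s v : inR (x :: s) v <-> v = 0 \/ exists2 w, inR s w & v = x + w.
Proof.
split.
  case=> [[|k]] /= hk ->; first by left; rewrite S0.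
  by right; exists (S s k) => //; exists k.
case=> [->|[w [k hk ->] ->]]; first exact: inR0.
by exists k.+1.
Qed.

Definition pos (s : seq nat) := all (fun x => x != 0) s.

Lemma pos_flat s : pos (flat s).
Proof. by rewrite /pos /flat filter_all. Qed.

Lemma sumn_flat s : sumn (flat s) = sumn s.
Proof. by elim: s => [|x s IH] //=; case: eqP => [->|_] /=; rewrite IH. Qed.

Lemma inR_flat s v : inR (flat s) v <-> inR s v.
Proof.
elim: s v => [|x s IH] v //=.
case: eqP => [->|_].
  rewrite inR_cons; split; first by move/IH => ?; right; exists v.
  by case=> [->|[w /IH ? ->]] //; exact: inR0.
rewrite !inR_cons; split; case=> [->|[w hw ->]]; by [left | right; exists w => //; apply/IH].
Qed.

Lemma inR_inj f g : pos f -> pos g -> (forall v, inR f v <-> inR g v) -> f = g.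
Proof.
elim: f g => [|x f IH] [|y g] //=.
- move=> _ /andP[hy _] /(_ y) [_ h].
  have /h [k] : inR (y :: g) y by exists 1; rewrite //= /S /= take0 addn0.
  by rewrite leqn0 => /eqP -> /=; rewrite S0 => /eqP; rewrite (negbTE hy).
- move=> /andP[hx _] _ /(_ x) [h _].
  have /h [k] : inR (x :: f) x by exists 1; rewrite //= /S /= take0 addn0.
  by rewrite leqn0 => /eqP -> /=; rewrite S0 => /eqP; rewrite (negbTE hx).
move=> /andP[hx pf] /andP[hy pg] h.
have Hxy : forall x y f g, x != 0 -> y != 0 -> (forall v, inR (x :: f) v -> inR (y :: g) v) -> y <= x.
  move=> x' y' f' g' hx' hy' h'.
  have : inR (x' :: f') x' by apply/inR_cons; right; exists 0; [exact: inR0|rewrite addn0].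
  move/h'/inR_cons => [/eqP|[w _ ->]]; [by rewrite (negbTE hx')|exact: leq_addr].
have exy : x = y.
  apply/eqP; rewrite eqn_leq (Hxy _ _ g f hy hx) ?(Hxy _ _ f g hx hy) //.
    by move=> v; case: (h v).
  by move=> v; case: (h v).
subst y; congr (_ :: _); apply: IH => // v.
have key : forall s w, x != 0 -> inR (x :: s) (x + w) <-> inR s w.
  move=> s w hx'; rewrite inR_cons; split.
    case=> [/eqP|[w' hw /eqP]]; first by rewrite addn_eq0 (negbTE hx').
    by rewrite eqn_add2l => /eqP ->.
  by move=> hw; right; exists w.
by rewrite -(key f v hx) -(key g v hx).
Qed.

Lemma pos_drop i f : pos f -> pos (drop i f).
Proof. by move=> pf; apply/allP => x /mem_drop; apply: (allP pf). Qed.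

Lemma sumn_take_drop i f : sumn f = S f i + sumn (drop i f).
Proof. by rewrite /S -{1}(cat_take_drop i f) sumn_cat. Qed.

Lemma refinesP f g : pos f -> pos g ->
  refines f g <-> (forall v, inR g v -> inR f v) /\ sumn f = sumn g.
Proof.
elim: g f => [|k g IH] f pf pg /=.
  split.
    move/eqP->; split => // v [k' hk ->]; move: hk; rewrite leqn0 => /eqP ->.
  case=> _; case: f pf => [|x f] //= /andP[hx _]; lia.
move: pg => /andP[hk pg].
split.
  case/hasP => i; rewrite mem_iota => /andP[i1 i2] /andP[/eqP hki hr].
  have [IH1 IH2] := (IH (drop i f) (pos_drop i pf) pg).1 hr.
  split.
    move=> v /inR_cons [->|[w hw ->]]; first exact: inR0.
    have [j hj ->] := IH1 _ hw.
    exists (i + j); first by move: hj; rewrite size_drop; lia.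
    by rewrite S_add -hki.
  by rewrite (sumn_take_drop i f) -hki IH2.
case=> Hin Hs.
have : inR f k by apply: Hin; apply/inR_cons; right; exists 0; [exact: inR0|rewrite addn0].
case=> i hi hki.
have i0 : i != 0 by apply/negP => /eqP Hi; move: hki hk; rewrite Hi S0 => ->.
apply/hasP; exists i; first by rewrite mem_iota; lia.
apply/andP; split; first by rewrite hki.
apply/(IH _ (pos_drop i pf) pg); split.
  move=> w hw.
  have : inR f (k + w) by apply: Hin; apply/inR_cons; right; exists w.
  case=> j hj e.
  case: (leqP j i) => hji.
    have := S_mono f hji; rewrite -hki -e => ?.
    have -> : w = 0 by lia.
    exact: inR0.
  exists (j - i); first by rewrite size_drop; lia.
  have ej : j = i + (j - i) by lia.
  move: e; rewrite {1}ej S_add -hki; lia.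
have := sumn_take_drop i f; move: Hs => /=; lia.
Qed.

Definition FS (b c : seq nat) : bool :=
  [&& size c == size b, sumn c == sumn b &
   all (fun q => (nth 0 b q != 0) ==> ((S c q.+1 == S b q.+1) && (nth 0 c q != 0)))
       (iota 0 (size b))].

Lemma FSP b c : FS b c <-> [/\ size c = size b, sumn c = sumn b &
  forall q, q < size b -> nth 0 b q != 0 -> S c q.+1 = S b q.+1 /\ nth 0 c q != 0].
Proof.
split.
  case/and3P => /eqP h1 /eqP h2 /allP h3; split => // q hq hb.
  have hq' : q \in iota 0 (size b) by rewrite mem_iota; lia.
  by have /implyP/(_ hb)/andP[/eqP ? ?] := h3 q hq'.
case=> h1 h2 h3; apply/and3P; split; try by apply/eqP.
apply/allP => q; rewrite mem_iota => hq; apply/implyP => hb.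
have [-> ->] := h3 q ltac:(lia) hb; by rewrite eqxx.
Qed.

Lemma FS_ge b c : FS b c -> forall k, S b k <= S c k.
Proof.
move/FSP => [hs _ h] k; elim: k => [|k IH]; first by rewrite !S0.
have [hk|hk] := eqVneq (nth 0 b k) 0.
  by rewrite S_succ hk addn0 (leq_trans IH) // S_mono.
have hks : k < size b by case: (ltnP k (size b)) => // ?; move: hk; rewrite nth_default.
by have [-> _] := h k hks hk.
Qed.

Lemma FS_range b c : FS b c -> forall k, exists2 j, j <= k & S b k = S c j.
Proof.
move/FSP => [hs _ h] k; elim: k => [|k [j hj IH]]; first by exists 0; rewrite ?S0.
have [hk|hk] := eqVneq (nth 0 b k) 0.
  by exists j; [lia | rewrite S_succ hk addn0].
have hks : k < size b by case: (ltnP k (size b)) => // ?; move: hk; rewrite nth_default.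
by have [e _] := h k hks hk; exists k.+1.
Qed.

Lemma FS_jump b c : FS b c -> forall k d, S b k < S b (k + d) -> S c k < S b (k + d).
Proof.
move=> H; have [hs _ h] := (FSP b c).1 H; move=> k d; elim: d => [|d IH].
  by rewrite addn0 ltnn.
rewrite addnS => hlt.
case: (ltnP (S b k) (S b (k + d))) => hd.
  by rewrite (leq_trans (IH hd)) // S_mono.
have e : S b (k + d) = S b k by apply/eqP; rewrite eqn_leq hd S_mono // leq_addr.
have hk : nth 0 b (k + d) != 0 by apply/eqP => h0; move: hlt; rewrite S_succ h0 addn0 e ltnn.
have hks : k + d < size b by case: (ltnP (k + d) (size b)) => // ?; move: hk; rewrite nth_default.
have [e1 e2] := h _ hks hk.
rewrite -e1 S_succ.
have := S_mono c (leq_addr d k); lia.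
Qed.

Lemma stepP b c c' : slide_step b c c' -> exists p,
  [/\ p.+1 < size c /\ size c' = size c, nth 0 c p = 0,
      nth 0 c' p + nth 0 c' p.+1 = nth 0 c p.+1,
      (forall q, q != p -> q != p.+1 -> nth 0 c' q = nth 0 c q) &
      (nth 0 b p.+1 != 0 -> 0 < nth 0 c' p.+1)].
Proof.
case/hasP => p; rewrite mem_iota => /andP[_ hp] /and5P[/eqP hs /eqP h0 /eqP hsum /allP hall himp].
exists p; split => //; first by split => //; lia.
  move=> q hq1 hq2; case: (ltnP q (size c)) => hq.
    by apply/eqP; apply: hall; rewrite mem_filter hq1 hq2 mem_iota /=.
  by rewrite !nth_default ?hs.
exact: (implyP himp).
Qed.

Lemma S_step b c c' p :
  [/\ p.+1 < size c /\ size c' = size c, nth 0 c p = 0,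
      nth 0 c' p + nth 0 c' p.+1 = nth 0 c p.+1,
      (forall q, q != p -> q != p.+1 -> nth 0 c' q = nth 0 c q) &
      (nth 0 b p.+1 != 0 -> 0 < nth 0 c' p.+1)] ->
  forall k, S c' k = S c k + (if k == p.+1 then nth 0 c' p else 0).
Proof.
case=> [[hp hs]] h0 hsum hq _; elim=> [|k IH]; first by rewrite !S0.
rewrite !S_succ IH.
have [->|hkp] := eqVneq k p.
  by rewrite h0 eqxx (ltn_eqF (ltnSn p)); lia.
have [->|hkp1] := eqVneq k p.+1.
  by rewrite (gtn_eqF (ltnSn p.+1)); lia.
by rewrite (hq k hkp hkp1) eqSS (negbTE hkp) addn0 addn0.
Qed.

Lemma step_sumn b c c' : slide_step b c c' -> size c' = size c /\ sumn c' = sumn c.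
Proof.
case/stepP => p H; have := S_step H (size c); case: H => [[hp hs]] _ _ _ _.
rewrite !S_over ?hs //; case: eqP => [?|_]; first lia.
by rewrite addn0.
Qed.

Lemma FS_step b c c' : FS b c -> slide_step b c c' -> FS b c'.
Proof.
move=> /FSP [hs1 hs2 hf] st; have [e1 e2] := step_sumn st.
case/stepP: st => p H; have HS := S_step H; case: H => [[hp hs]] h0 hsum hq himp.
apply/FSP; split; try congruence.
move=> q hqb hb; have [f1 f2] := hf q hqb hb.
have qp : q != p by apply/eqP => E; move: f2; rewrite E h0.
split.
  by rewrite HS f1 eqSS (negbTE qp) addn0.
have [E|qp1] := eqVneq q p.+1.
  by move: hb; rewrite E => /himp; rewrite lt0n.
by rewrite hq.
Qed.

Lemma FS_refl b : FS b b.
Proof. by apply/FSP; split. Qed.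

Definition Xs (b c : seq nat) r :=
  [seq (if i < r then nth 0 b i else if i == r then S c r.+1 - S b r else nth 0 c i)
  | i <- iota 0 (size b)].

Lemma size_Xs b c r : size (Xs b c r) = size b.
Proof. by rewrite size_map size_iota. Qed.

Lemma nth_Xs b c r i : i < size b -> nth 0 (Xs b c r) i =
  (if i < r then nth 0 b i else if i == r then S c r.+1 - S b r else nth 0 c i).
Proof. by move=> h; rewrite (nth_map 0) ?size_iota // nth_iota. Qed.

Lemma Xs_lt b c r i : i < r -> i < size b -> nth 0 (Xs b c r) i = nth 0 b i.
Proof. by move=> h1 h2; rewrite nth_Xs // h1. Qed.

Lemma Xs_eq b c r : r < size b -> nth 0 (Xs b c r) r = S c r.+1 - S b r.
Proof. by move=> h; rewrite nth_Xs // ltnn eqxx. Qed.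

Lemma Xs_gt b c r i : r < i -> i < size b -> nth 0 (Xs b c r) i = nth 0 c i.
Proof. by move=> h1 h2; rewrite nth_Xs // ltnNge (ltnW h1) /= (gtn_eqF h1). Qed.

Lemma stepI b c c' p : p.+1 < size c -> size c' = size c -> nth 0 c p = 0 ->
  nth 0 c' p + nth 0 c' p.+1 = nth 0 c p.+1 ->
  (forall q, q < size c -> q != p -> q != p.+1 -> nth 0 c' q = nth 0 c q) ->
  (nth 0 b p.+1 != 0 -> 0 < nth 0 c' p.+1) -> slide_step b c c'.
Proof.
move=> hp hs h0 hsum hq himp; apply/hasP; exists p; first by rewrite mem_iota; lia.
rewrite hs eqxx h0 eqxx hsum eqxx /=; apply/andP; split; last exact/implyP.
apply/allP => q; rewrite mem_filter mem_iota => /andP[/andP[q1 q2] /andP[_ q3]].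
by apply/eqP; apply: hq.
Qed.

Lemma Xs_last b c : FS b c -> 0 < size b -> Xs b c (size b).-1 = b.
Proof.
move=> /FSP [hs hsum _] hb; apply: (@eq_from_nth _ 0); rewrite ?size_Xs // => i hi.
have e1 : (size b).-1.+1 = size b by lia.
case: (ltnP i (size b).-1) => h; first by rewrite Xs_lt.
have -> : i = (size b).-1 by lia.
rewrite Xs_eq; last lia.
rewrite e1 S_over ?hs // hsum.
have := S_succ b (size b).-1; rewrite e1 (S_over (leqnn _)); lia.
Qed.

Lemma Xs_first b c : FS b c -> Xs b c 0 = c.
Proof.
move=> /FSP [hs hsum _]; apply: (@eq_from_nth _ 0); rewrite ?size_Xs // => i hi.
case: i hi => [|i] hi; last by rewrite Xs_gt.
by rewrite Xs_eq // S_succ !S0 add0n subn0.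
Qed.

Lemma Xs_step b c r : FS b c -> r.+1 < size b ->
  Xs b c r = Xs b c r.+1 \/ slide_step b (Xs b c r.+1) (Xs b c r).
Proof.
move=> H hr; have [hs hsum hf] := (FSP b c).1 H; have hge := FS_ge H.
have e1 := S_succ c r.+1; have e2 := S_succ b r; have e3 := S_succ c r; have e4 := hge r.
have [hb|hb] := eqVneq (nth 0 b r) 0.
  right; apply: (stepI (p := r)); rewrite ?size_Xs //.
  - by rewrite Xs_lt //; lia.
  - rewrite (@Xs_eq b c r) ?(@Xs_gt b c r r.+1) ?(@Xs_eq b c r.+1) //; lia.
  - move=> q hq q1 q2.
    case: (ltnP q r) => h; first by rewrite !Xs_lt //; lia.
    by rewrite !Xs_gt //; lia.
  - move=> /(hf _ hr) [_]; rewrite Xs_gt //; lia.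
left; apply: (@eq_from_nth _ 0); rewrite ?size_Xs // => i hi.
have [f1 _] := hf r (ltnW hr) hb.
have [hlt|hgt|->] := ltngtP i r.
- by rewrite !Xs_lt //; lia.
- have [->|ne] := eqVneq i r.+1.
    rewrite Xs_gt // Xs_eq //; lia.
  by rewrite !Xs_gt //; lia.
- rewrite Xs_eq ?Xs_lt //; lia.
Qed.

Definition Bf (A c : seq nat) k := \max_(j < (size A).+1 | S A j <= S c k) S A j.

Lemma Bf_in A c k : exists2 j, j <= size A & S A j <= S c k /\ Bf A c k = S A j.
Proof.
rewrite /Bf (bigmax_eq_arg ord0) ?S0 //.
case: arg_maxnP; rewrite ?S0 // => i Pi _; exists i => //; exact: ltn_ord i.
Qed.

Lemma Bf_ge A c k j : j <= size A -> S A j <= S c k -> S A j <= Bf A c k.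
Proof.
move=> hj hs; rewrite -ltnS in hj.
exact: (leq_bigmax_cond (Ordinal hj) (F := fun i : 'I_(size A).+1 => S A i)).
Qed.

Lemma Bf0 A c : Bf A c 0 = 0.
Proof. by have [j _ [h ->]] := Bf_in A c 0; move: h; rewrite S0 leqn0 => /eqP. Qed.

Lemma Bf_mono A c k : Bf A c k <= Bf A c k.+1.
Proof.
have [j hj [h ->]] := Bf_in A c k; apply: Bf_ge => //.
by rewrite (leq_trans h) // S_mono.
Qed.

Definition bsq (A c : seq nat) := [seq Bf A c i.+1 - Bf A c i | i <- iota 0 (size A)].

Lemma size_bsq A c : size (bsq A c) = size A.
Proof. by rewrite size_map size_iota. Qed.

Lemma nth_bsq A c i : i < size A -> nth 0 (bsq A c) i = Bf A c i.+1 - Bf A c i.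
Proof. by move=> h; rewrite (nth_map 0) ?size_iota // nth_iota. Qed.

Lemma S_bsq A c k : k <= size A -> S (bsq A c) k = Bf A c k.
Proof.
elim: k => [|k IH] hk; first by rewrite S0 Bf0.
rewrite S_succ IH ?nth_bsq //; try lia.
have := Bf_mono A c k; lia.
Qed.

Lemma B2 A c : size c = size A -> (forall k, S A k <= S c k) -> refines (flat c) (flat A) ->
  [/\ forall k, S A k <= S (bsq A c) k, flat (bsq A c) = flat A & FS (bsq A c) c].
Proof.
move=> hs hdom href.
have [Hin Hsum] := (refinesP (pos_flat c) (pos_flat A)).1 href.
have Hin' : forall v, inR A v -> inR c v.
  by move=> v h; apply/(inR_flat c v)/Hin/(inR_flat A v).
rewrite !sumn_flat in Hsum.
have HBn : Bf A c (size A) = S A (size A).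
  have := Bf_ge (leqnn (size A)) (hdom _).
  have [j hj [_ ->]] := Bf_in A c (size A).
  have := S_mono A hj; lia.
split.
- move=> k; rewrite S_min [S (bsq A c) k]S_min size_bsq.
  rewrite S_bsq ?geq_minr //; apply: Bf_ge; [exact: geq_minr | exact: hdom].
- apply: inR_inj; [exact: pos_flat | exact: pos_flat | move=> v; rewrite !inR_flat].
  split.
    case=> k; rewrite size_bsq => hk ->; rewrite S_bsq //.
    by have [j hj [_ ->]] := Bf_in A c k; exists j.
  case=> j hj ->.
  have [k hk e] := Hin' (S A j) (ex_intro2 _ _ j hj erefl).
  exists k; first by rewrite size_bsq -hs.
  rewrite S_bsq -?hs //.
  have := Bf_ge (c := c) (k := k) hj ltac:(by rewrite e).
  have [j' hj' [h1 ->]] := Bf_in A c k; lia.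
apply/FSP; split; first by rewrite size_bsq.
  have e := @S_over (bsq A c) (size A); rewrite size_bsq in e.
  by rewrite -e // S_bsq // HBn S_over // Hsum.
move=> q; rewrite size_bsq => hq; rewrite nth_bsq // => hne.
have hm := Bf_mono A c q.
have [j1 hj1 [h1 e1]] := Bf_in A c q.+1.
have [j hj e] := Hin' (S A j1) (ex_intro2 _ _ j1 hj1 erefl).
have hlt : S c q < S c j.
  rewrite ltnNge; apply/negP => hle.
  have := Bf_ge (c := c) (k := q) hj1 ltac:(by rewrite e).
  move: hne; rewrite -e1; lia.
have hqj : q < j by rewrite ltnNge; apply/negP => /(S_mono c); lia.
have := S_mono c hqj; rewrite S_bsq // e1 e => h2; rewrite e in h1.
have := S_succ c q; split; lia.
Qed.

Lemma B3 A b c : size b = size A -> flat b = flat A -> FS b c -> b = bsq A c.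
Proof.
move=> hs hfl H.
have hran : forall v, inR b v <-> inR A v.
  by move=> v; rewrite -inR_flat hfl inR_flat.
have hSB : forall k, k <= size A -> S b k = Bf A c k.
  move=> k hk; apply/eqP; rewrite eqn_leq; apply/andP; split.
    have : inR b (S b k) by exists k; rewrite ?hs.
    move=> /hran [j hj e].
    by rewrite e; apply: Bf_ge => //; rewrite -e; exact: FS_ge.
  have [j0 hj0 [h1 ->]] := Bf_in A c k.
  have [j hj e] := (hran (S A j0)).2 (ex_intro2 _ _ j0 hj0 erefl).
  rewrite e leqNgt; apply/negP => hlt.
  have hkj : k <= j by rewrite leqNgt; apply/negP => /ltnW /(S_mono b); lia.
  have := FS_jump H (k := k) (d := j - k); rewrite subnKC //.
  move=> /(_ hlt); lia.
apply: (@eq_from_nth _ 0); rewrite ?size_bsq // => i hi.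
rewrite nth_bsq -?hs // -!hSB -?hs //; try lia.
have := S_succ b i; lia.
Qed.

Lemma B1 A b c : size b = size A -> (forall k, S A k <= S b k) -> flat b = flat A -> FS b c ->
  [/\ size c = size A, (forall k, S A k <= S c k) & refines (flat c) (flat A)].
Proof.
move=> hs hdom hfl H; have [hs' hsum _] := (FSP b c).1 H.
split; first by rewrite hs'.
  by move=> k; rewrite (leq_trans (hdom k)) // FS_ge.
apply/(refinesP (pos_flat c) (pos_flat A)); split.
  move=> v; rewrite -hfl => /(inR_flat b v) [k hk ->].
  have [j hj ->] := FS_range H k.
  by apply/inR_flat; exists j => //; rewrite hs'; lia.
by rewrite !sumn_flat hsum -(sumn_flat b) hfl sumn_flat.
Qed.

Import GRing.Theory.
Lemma wc_size n (m : 'X_{1..n}) : size (wc m) = n.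
Proof. exact: size_tuple. Qed.

Lemma wc_inj n : injective (@wc n).
Proof. by move=> m1 m2 h; apply: val_inj; apply: val_inj. Qed.

Lemma mdeg_wc n (m : 'X_{1..n}) : mdeg m = sumn (wc m).
Proof. by rewrite /mdeg sumnE. Qed.

Lemma mk_wc n (s : seq nat) : size s = n -> exists m : 'X_{1..n}, wc m = s.
Proof.
move=> hs; exists [multinom nth 0 s i | i < n].
apply: (@eq_from_nth _ 0); rewrite ?wc_size // => i hi.
have := mnm_nth 0 [multinom nth 0 s i | i < n] (Ordinal hi).
by rewrite mnmE /= => <-.
Qed.

Lemma mk_bwc n B (s : seq nat) : size s = n -> sumn s < B ->
  exists x : 'X_{1..n < B}, wc (bmnm x) = s.
Proof.
move=> hs hB; have [m hm] := mk_wc hs.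
have h : mdeg m < B by rewrite mdeg_wc hm.
by exists (BMultinom h).
Qed.

Lemma fixedP n (b : 'X_{1..n}) (c : 'X_{1..n < (mdeg b).+1}) :
  is_fixed_slide c = FS (wc b) (wc (bmnm c)).
Proof.
apply/idP/idP.
  case/connectP => p pth ->.
  have : FS (wc b) (wc (bmnm (bself b))) by exact: FS_refl.
  elim: p (bself b) pth => [|y p IH] x //= /andP[e pth] hx.
  exact: IH pth (FS_step hx e).
move=> H.
have eqb : forall x : 'X_{1..n < (mdeg b).+1}, wc (bmnm x) = wc b -> x = bself b.
  by move=> x hx; apply: val_inj; apply: wc_inj.
have [n0|npos] := posnP n.
  rewrite (eqb c); first exact: connect0.
  have /size0nil -> : size (wc (bmnm c)) = 0 by rewrite wc_size.
  by have /size0nil -> : size (wc b) = 0 by rewrite wc_size.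
have hsB : size (wc b) = n by rewrite wc_size.
have claim : forall d, d < n -> forall x : 'X_{1..n < (mdeg b).+1},
    wc (bmnm x) = Xs (wc b) (wc (bmnm c)) (n.-1 - d) -> connect (@slide_rel n b) (bself b) x.
  elim=> [|d IH] hd x hx.
    rewrite (eqb x); first exact: connect0.
    rewrite hx subn0.
    have -> : n.-1 = (size (wc b)).-1 by rewrite hsB.
    by rewrite Xs_last // hsB.
  have hr : (n.-1 - d.+1).+1 < size (wc b) by rewrite hsB; lia.
  have er : (n.-1 - d.+1).+1 = n.-1 - d by lia.
  case: (Xs_step H hr) => [e|st].
    by apply: IH; [lia | rewrite hx e er].
  have [sz sm] := step_sumn st.
  have [x' hx'] := @mk_bwc n (mdeg b).+1 (Xs (wc b) (wc (bmnm c)) (n.-1 - d.+1).+1)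
    ltac:(by rewrite -sz -hx wc_size) ltac:(by rewrite -sm -hx -mdeg_wc bmdeg).
  apply: (connect_trans (IH ltac:(lia) x' ltac:(by rewrite hx' er))).
  by apply: connect1; rewrite /slide_rel hx hx'.
have := claim n.-1 ltac:(lia) c; rewrite subnn Xs_first //; exact.
Qed.

Lemma coef_sum n d (Pr : pred 'X_{1..n}) (m : 'X_{1..n}) :
  mcoeff m (\sum_(c : 'X_{1..n < d} | Pr (bmnm c)) 'X_[bmnm c] : {mpoly int[n]})%R
  = ((Pr m && (mdeg m < d)%N)%:R)%R.
Proof.
rewrite raddf_sum /=.
case: (boolP (mdeg m < d)) => hd; last first.
  rewrite andbF big1 // => c _; rewrite mcoeffX; case: eqP => // e.
  by move: hd; rewrite -e bmdeg.
case: (boolP (Pr m)) => hP /=.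
  rewrite (bigD1 (BMultinom hd)) //= mcoeffX eqxx big1 ?GRing.addr0 // => c /andP[_ hne].
  rewrite mcoeffX; case: eqP => // e; move: hne.
  have -> : c = BMultinom hd by apply: val_inj.
  by rewrite eqxx.
apply: big1 => c hc; rewrite mcoeffX; case: eqP => // e.
by move: hP; rewrite -e hc.
Qed.

Lemma mono_coef n (b : 'X_{1..n}) m :
  mcoeff m (mono_slide b) = ((FS (wc b) (wc m) && (mdeg m < (mdeg b).+1)%N)%:R)%R.
Proof.
rewrite /mono_slide (eq_bigl (fun c => FS (wc b) (wc (bmnm c)))) => [|c]; last exact: fixedP.
exact: (coef_sum _ (fun m => FS (wc b) (wc m))).
Qed.

Lemma domP n (b a : 'X_{1..n}) : dominates b a <-> forall k, S (wc a) k <= S (wc b) k.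
Proof.
split => [/allP h k|h]; last by apply/allP => k _; apply: h.
rewrite S_min [S (wc b) k]S_min !wc_size; apply: h; rewrite mem_iota; lia.
Qed.

Theorem proposition4p7 (n : nat) (a : 'X_{1..n}) :
  fund_slide a =
  (\sum_(b : 'X_{1..n < (mdeg a).+1} |
          dominates (bmnm b) a && (flat (wc (bmnm b)) == flat (wc a)))
     mono_slide (bmnm b))%R.
Proof.
apply/mpolyP => m.
rewrite /fund_slide (coef_sum _ (fun m => dominates m a && refines (flat (wc m)) (flat (wc a)))).
rewrite raddf_sum /=.
under eq_bigr => b _ do rewrite mono_coef.
have [hP|hP] := boolP ((dominates m a && refines (flat (wc m)) (flat (wc a))) && (mdeg m < (mdeg a).+1)).
  move: (hP) => /andP[/andP[hdom href] hdeg].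
  have [h1 h2 h3] := B2 (A := wc a) (c := wc m) ltac:(by rewrite !wc_size) (proj1 (domP m a) hdom) href.
  have hsz : size (bsq (wc a) (wc m)) = n by rewrite size_bsq wc_size.
  have [_ hsum _] := (FSP _ _).1 h3.
  have [b0 hb0] := @mk_bwc n (mdeg a).+1 _ hsz ltac:(by rewrite -hsum -mdeg_wc).
  rewrite (bigD1 b0) /=; last by rewrite hb0 h2 eqxx andbT; apply/domP; rewrite hb0.
  rewrite hb0 h3 /= (mdeg_wc m) (mdeg_wc b0) hb0 hsum ltnSn /=.
  rewrite big1 ?GRing.addr0 // => b /andP[/andP[hd /eqP hf] hne].
  case: (boolP (FS (wc b) (wc m))) => hF //=.
  have e := B3 (A := wc a) (b := wc b) (c := wc m) ltac:(by rewrite !wc_size) hf hF.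
  have eb : b = b0 by apply: val_inj; apply: wc_inj; rewrite hb0.
  by move: hne; rewrite eb eqxx.
rewrite big1 // => b /andP[hd /eqP hf].
case: (boolP (FS (wc b) (wc m))) => hF //=.
have [_ h2 h3] := B1 (A := wc a) (b := wc b) (c := wc m) ltac:(by rewrite !wc_size) (proj1 (domP b a) hd) hf hF.
have [_ hsum _] := (FSP _ _).1 hF.
exfalso; move/negP: hP; apply.
rewrite h3 andbT; apply/andP; split; first by apply/domP.
by rewrite mdeg_wc hsum -mdeg_wc bmdeg.
Qed.
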